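(* For all $\alpha\in\mathbb R$ and $\rho>1$, $$\lim_{n\to\infty}\max_{Q\in\mathcal P_n(\rho)}D_{\mathrm A}^{(\alpha)}(U_n\|Q)=\Delta(\alpha,\rho),$$ where $\Delta(\alpha,\rho)=\frac1{\alpha(\alpha-1)}\Big[\frac{((\rho^\alpha-1)/\alpha)^{\alpha}((\rho-\rho^\alpha)/(1-\alpha))^{1-\alpha}}{\rho-1}-1\Big]$ for $\alpha\notin\{0,1\}$ and $\Delta(1,\rho)=\Delta(0,\rho)=\frac{\rho\ln\rho}{\rho-1}-\ln\frac{e\rho\ln\rho}{\rho-1}$.
   Context: $\mathcal P_n(\rho)$: probability mass functions on $\{1,\dots,n\}$ with all masses positive and max/min mass ratio at most $\rho$; $U_n$ uniform on $\{1,\dots,n\}$. $D_{\mathrm A}^{(\alpha)}(P\|Q)=\sum_xQ(x)u_\alpha(P(x)/Q(x))$ with $u_\alpha(t)=\frac{t^\alpha-\alpha(t-1)-1}{\alpha(\alpha-1)}$ ($\alpha\notin\{0,1\}$), $u_1(t)=t\ln t+1-t$, $u_0(t)=-\ln t$. *)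

(* Defs.v *)
From Stdlib Require Import Reals.
Open Scope R_scope.

Fixpoint fsum (f : nat -> R) (n : nat) : R :=
  match n with
  | O => 0
  | S m => fsum f m + f m
  end.

(* A pmf on {1..n} is represented as Q : nat -> R on indices 0..n-1.
   Membership in P_n(rho): all masses positive, total mass 1,
   max/min ratio at most rho (i.e. Q i <= rho * Q j for all i, j). *)
Definition in_Pn (n : nat) (rho : R) (Q : nat -> R) : Prop :=
  (forall i, (i < n)%nat -> 0 < Q i) /\
  fsum Q n = 1 /\
  (forall i j, (i < n)%nat -> (j < n)%nat -> Q i <= rho * Q j).

Definition u (alpha t : R) : R :=
  if Req_EM_T alpha 0 then - ln t
  else if Req_EM_T alpha 1 then t * ln t + 1 - t
  else (Rpower t alpha - alpha * (t - 1) - 1) / (alpha * (alpha - 1)).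

Definition DA (alpha : R) (n : nat) (P Q : nat -> R) : R :=
  fsum (fun x => Q x * u alpha (P x / Q x)) n.

Definition Unif (n : nat) : nat -> R := fun _ => / INR n.

Definition DeltaA (alpha rho : R) : R :=
  if Req_EM_T alpha 0 then
    rho * ln rho / (rho - 1) - ln (exp 1 * rho * ln rho / (rho - 1))
  else if Req_EM_T alpha 1 then
    rho * ln rho / (rho - 1) - ln (exp 1 * rho * ln rho / (rho - 1))
  else
    / (alpha * (alpha - 1)) *
      (Rpower ((Rpower rho alpha - 1) / alpha) alpha
       * Rpower ((rho - Rpower rho alpha) / (1 - alpha)) (1 - alpha)
       / (rho - 1) - 1).

Definition is_max_div (alpha rho : R) (n : nat) (m : R) : Prop :=
  (exists Q, in_Pn n rho Q /\ DA alpha n (Unif n) Q = m) /\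
  (forall Q, in_Pn n rho Q -> DA alpha n (Unif n) Q <= m).

(* Main.v *)
Require Import Defs.
From Stdlib Require Import Reals Lra Lia.
From Coquelicot Require Import Coquelicot.
Open Scope R_scope.

Lemma exp_tan (y t : R) : exp t * (1 + (y - t)) <= exp y.
Proof.
  replace y with (t + (y - t)) at 2 by ring. rewrite exp_plus.
  apply Rmult_le_compat_l. left; apply exp_pos. apply exp_ineq1_le.
Qed.

Lemma exp_chord (th y z : R) : 0 <= th <= 1 ->
  exp (th * y + (1 - th) * z) <= th * exp y + (1 - th) * exp z.
Proof.
  intros [h0 h1]. set (t := th * y + (1 - th) * z).
  pose proof (exp_tan y t). pose proof (exp_tan z t).
  assert (th * (exp t * (1 + (y - t))) + (1 - th) * (exp t * (1 + (z - t))) = exp t)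
    by (unfold t; ring).
  nra.
Qed.

Lemma bern (x a : R) : 0 < x -> 0 <= a * (a - 1) * (Rpower x a - 1 - a * (x - 1)).
Proof.
  intros hx. unfold Rpower. set (l := ln x).
  assert (hxl : x = exp l) by (unfold l; rewrite exp_ln; auto).
  rewrite hxl.
  destruct (Rlt_le_dec 1 a) as [h1|h1].
  - pose proof (exp_chord (/ a) (a * l) 0).
    replace (/ a * (a * l) + (1 - / a) * 0) with l in H by (field; lra).
    rewrite exp_0 in H.
    assert (exp l * a <= exp (a * l) + (a - 1)).
    { assert (0 <= /a <= 1). split. left; apply Rinv_0_lt_compat; lra.
      rewrite <- Rinv_1. apply Rinv_le_contravar; lra.
      specialize (H H0).
      apply Rmult_le_compat_r with (r := a) in H; [|lra].
      replace ((/ a * exp (a * l) + (1 - / a) * 1) * a) with (exp (a*l) + (a-1)) in H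
        by (field; lra). lra. }
    apply Rmult_le_pos; nra.
  - destruct (Rlt_le_dec a 0) as [h0|h0].
    + pose proof (exp_chord (/ (1 - a)) (a * l) l).
      replace (/ (1 - a) * (a * l) + (1 - / (1 - a)) * l) with 0 in H by (field; lra).
      rewrite exp_0 in H.
      assert (0 <= /(1-a) <= 1). split. left; apply Rinv_0_lt_compat; lra.
      rewrite <- Rinv_1. apply Rinv_le_contravar; lra.
      specialize (H H0).
      apply Rmult_le_compat_r with (r := 1 - a) in H; [|lra].
      replace ((/ (1 - a) * exp (a * l) + (1 - / (1 - a)) * exp l) * (1 - a))
        with (exp (a*l) - a * exp l) in H by (field; lra).
      apply Rmult_le_pos; nra.
    + pose proof (exp_chord a l 0). rewrite Rmult_0_r, Rplus_0_r, exp_0 in H.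
      specialize (H (conj h0 h1)).
      assert (0 <= a * (1 - a)) by nra. nra.
Qed.


Lemma ln_le (y : R) : 0 < y -> ln y <= y - 1.
Proof. intros h. pose proof (exp_ineq1_le (ln y)). rewrite exp_ln in H; lra. Qed.

Lemma ln_div (x y : R) : 0 < x -> 0 < y -> ln (x / y) = ln x - ln y.
Proof. intros. unfold Rdiv. rewrite ln_mult, ln_Rinv; try lra. apply Rinv_0_lt_compat; auto. Qed.

Definition du (a t : R) : R :=
  if Req_EM_T a 0 then - / t
  else if Req_EM_T a 1 then ln t
  else (Rpower t (a - 1) - 1) / (a - 1).

Lemma Rpower_m1 (t a : R) : 0 < t -> Rpower t (a - 1) = Rpower t a / t.
Proof.
  intros h. unfold Rminus. rewrite Rpower_plus, Rpower_Ropp, Rpower_1; auto.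
Qed.

Lemma u_tan (a s t : R) : 0 < s -> 0 < t -> u a t + du a t * (s - t) <= u a s.
Proof.
  intros hs ht. unfold u, du.
  destruct (Req_EM_T a 0) as [e0|n0].
  - pose proof (ln_le (s / t)). rewrite ln_div in H by auto.
    assert (0 < s / t) by (apply Rdiv_lt_0_compat; auto).
    specialize (H H0). unfold Rdiv in *.
    replace (s * / t - 1) with (/ t * (s - t)) in H by (field; lra). lra.
  - destruct (Req_EM_T a 1) as [e1|n1].
    + pose proof (ln_le (t / s)). rewrite ln_div in H by auto.
      assert (0 < t / s) by (apply Rdiv_lt_0_compat; auto).
      specialize (H H0).
      apply Rmult_le_compat_l with (r := s) in H; [|lra].
      replace (s * (t / s - 1)) with (t - s) in H by (field; lra). nra.
    + set (x := s / t).
      assert (hx : 0 < x) by (apply Rdiv_lt_0_compat; auto).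
      assert (hsx : s = t * x) by (unfold x; field; lra).
      assert (Rpower s a = Rpower t a * Rpower x a).
      { rewrite hsx, Rpower_mult_distr; auto. }
      rewrite H, Rpower_m1 by auto.
      pose proof (bern x a hx).
      assert (ha : a * (a - 1) <> 0).
      { apply Rmult_integral_contrapositive; split; lra. }
      assert (hp : 0 < Rpower t a) by (unfold Rpower; apply exp_pos).
      set (B := Rpower x a - 1 - a * (x - 1)) in *.
      set (P := Rpower t a) in *.
      assert (eq : (P * Rpower x a - a * (s - 1) - 1) / (a * (a - 1))
        - ((P - a * (t - 1) - 1) / (a * (a - 1)) + (P / t - 1) / (a - 1) * (s - t))
        = P * (a * (a - 1) * B) / ((a * (a - 1)) * (a * (a - 1)))).
      { unfold B. rewrite hsx. field. repeat split; try lra. }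
      assert (0 <= P * (a * (a - 1) * B) / ((a * (a - 1)) * (a * (a - 1)))).
      { apply Rmult_le_pos. apply Rmult_le_pos; lra.
        left; apply Rinv_0_lt_compat. nra. }
      lra.
Qed.


Definition TAN (f D : R -> R) := forall p z, 0 < p -> 0 < z -> f z + D z * (p - z) <= f p.

Lemma chord_aff f D (hT : TAN f D) (al be a1 a2 x : R) :
  a2 <= x <= a1 -> 0 < al * a2 + be -> 0 < al * x + be -> 0 < al * a1 + be ->
  (a1 - a2) * f (al * x + be) <= (a1 - x) * f (al * a2 + be) + (x - a2) * f (al * a1 + be).
Proof.
  intros [h1 h2] p2 px p1.
  pose proof (hT _ _ p2 px) as T1. pose proof (hT _ _ p1 px) as T2.
  set (z := al * x + be) in *.
  set (d := D z) in *.
  apply Rmult_le_compat_l with (r := a1 - x) in T1; [|lra].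
  apply Rmult_le_compat_l with (r := x - a2) in T2; [|lra].
  assert ((a1 - x) * (f z + d * (al * a2 + be - z)) + (x - a2) * (f z + d * (al * a1 + be - z))
     = (a1 - a2) * f z) by (unfold z; ring).
  lra.
Qed.

Lemma pair_le f D (hT : TAN f D) (A B r y : R) :
  0 < A -> A <= r <= B -> A <= y <= B -> r + y = A + B -> f r + f y <= f A + f B.
Proof.
  intros hA hr hy hs.
  destruct (Req_dec A B) as [e|ne].
  - subst B. assert (r = A) by lra. assert (y = A) by lra. subst. lra.
  - pose proof (chord_aff f D hT 1 0 B A r hr) as C1.
    pose proof (chord_aff f D hT 1 0 B A y hy) as C2.
    rewrite !Rmult_1_l, !Rplus_0_r in C1, C2.
    assert (C3 : (B - A) * (f r + f y) <= (B - A) * (f A + f B)).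
    { assert ((B - r) * f A + (r - A) * f B + ((B - y) * f A + (y - A) * f B)
        = (B - A) * (f A + f B)) by (replace y with (A + B - r) by lra; ring).
      specialize (C1 ltac:(lra) ltac:(lra) ltac:(lra)).
      specialize (C2 ltac:(lra) ltac:(lra) ltac:(lra)). lra. }
    apply Rmult_le_reg_l with (B - A); lra.
Qed.

Lemma fsum_S f n : fsum f (S n) = fsum f n + f n.
Proof. reflexivity. Qed.

Lemma greedy f D (hT : TAN f D) (lo hi : R) : 0 < lo -> lo <= hi ->
  forall M (x : nat -> R), (forall i, (i <= M)%nat -> lo <= x i <= hi) ->
  exists k j r, (k + j = M)%nat /\ lo <= r <= hi /\
    fsum x (S M) = INR k * hi + INR j * lo + r /\
    fsum (fun i => f (x i)) (S M) <= INR k * f hi + INR j * f lo + f r.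
Proof.
  intros hlo hlh M. induction M as [|M IH]; intros x hx.
  - exists 0%nat, 0%nat, (x 0%nat). simpl. split; [lia|]. split.
    apply hx; lia. split; lra.
  - destruct (IH x) as (k & j & r & hkj & hr & hs & hf).
    { intros i hi'. apply hx. lia. }
    set (y := x (S M)). assert (hy : lo <= y <= hi) by (apply hx; lia).
    rewrite (fsum_S x (S M)), (fsum_S (fun i => f (x i)) (S M)). fold y.
    destruct (Rle_dec (r + y) (lo + hi)) as [c|c].
    + exists k, (S j), (r + y - lo). split; [lia|]. split; [lra|].
      rewrite S_INR. split; [rewrite hs; ring|].
      pose proof (pair_le f D hT lo (r + y - lo) r y hlo ltac:(lra) ltac:(lra) ltac:(lra)).
      lra.
    + exists (S k), j, (r + y - hi). split; [lia|]. split; [lra|].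
      rewrite S_INR. split; [rewrite hs; ring|].
      pose proof (pair_le f D hT (r + y - hi) hi r y ltac:(lra) ltac:(lra) ltac:(lra) ltac:(lra)).
      lra.
Qed.


Lemma step2 f D (hT : TAN f D) (rho K J lo r : R) : 1 < rho -> 0 <= K -> 0 <= J ->
  0 < lo -> lo <= r <= rho * lo -> K * rho * lo + J * lo + r = 1 ->
  K * f (rho * lo) + J * f lo + f r <=
  Rmax (K * f (rho * / (K * rho + J + 1)) + (J + 1) * f (/ (K * rho + J + 1)))
       ((K + 1) * f (rho * / ((K + 1) * rho + J)) + J * f (/ ((K + 1) * rho + J))).
Proof.
  intros hr hK hJ hlo hrr hsum.
  assert (p1 : 0 < K * rho + J + 1) by nra.
  assert (p2 : 0 < (K + 1) * rho + J) by nra.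
  set (a1 := / (K * rho + J + 1)). set (a2 := / ((K + 1) * rho + J)).
  assert (ha1 : 0 < a1) by (apply Rinv_0_lt_compat; auto).
  assert (ha2 : 0 < a2) by (apply Rinv_0_lt_compat; auto).
  assert (e1 : (K * rho + J + 1) * a1 = 1) by (unfold a1; field; lra).
  assert (e2 : ((K + 1) * rho + J) * a2 = 1) by (unfold a2; field; lra).
  assert (lo <= a1).
  { apply Rmult_le_reg_l with (K * rho + J + 1); auto. nra. }
  assert (a2 <= lo).
  { apply Rmult_le_reg_l with ((K + 1) * rho + J); auto. nra. }
  assert (a2 < a1).
  { apply Rmult_lt_reg_l with ((K * rho + J + 1) * ((K + 1) * rho + J)). nra.
    replace ((K * rho + J + 1) * ((K + 1) * rho + J) * a2) with (K * rho + J + 1)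
      by (rewrite Rmult_assoc, e2; ring).
    replace ((K * rho + J + 1) * ((K + 1) * rho + J) * a1) with ((K + 1) * rho + J)
      by (replace ((K * rho + J + 1) * ((K + 1) * rho + J) * a1) with
           (((K * rho + J + 1) * a1) * ((K + 1) * rho + J)) by ring; rewrite e1; ring).
    lra. }
  set (be := - (K * rho + J)).
  assert (hr' : r = be * lo + 1) by (unfold be; lra).
  pose proof (chord_aff f D hT rho 0 a1 a2 lo ltac:(split; lra) ltac:(rewrite Rplus_0_r; apply Rmult_lt_0_compat; lra) ltac:(rewrite Rplus_0_r; apply Rmult_lt_0_compat; lra) ltac:(rewrite Rplus_0_r; apply Rmult_lt_0_compat; lra)) as C1.
  pose proof (chord_aff f D hT 1 0 a1 a2 lo ltac:(split; lra) ltac:(lra) ltac:(lra) ltac:(lra)) as C2.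
  assert (q1 : be * a1 + 1 = a1) by (unfold be; lra).
  assert (q2 : be * a2 + 1 = rho * a2) by (unfold be; lra).
  assert (hle : a2 <= lo <= a1) by (split; lra).
  assert (z1 : 0 < be * a2 + 1) by (rewrite q2; apply Rmult_lt_0_compat; lra).
  assert (z2 : 0 < be * lo + 1) by lra.
  assert (z3 : 0 < be * a1 + 1) by lra.
  pose proof (chord_aff f D hT be 1 a1 a2 lo hle z1 z2 z3) as C3.
  rewrite q1, q2, <- hr' in C3.
  rewrite !Rplus_0_r in C1, C2. rewrite !Rmult_1_l in C2.
  set (V1 := K * f (rho * a1) + (J + 1) * f a1).
  set (V2 := (K + 1) * f (rho * a2) + J * f a2).
  assert (X : (a1 - a2) * (K * f (rho * lo) + J * f lo + f r) <= (a1 - lo) * V2 + (lo - a2) * V1).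
  { unfold V1, V2.
    apply Rmult_le_compat_l with (r := K) in C1; auto.
    apply Rmult_le_compat_l with (r := J) in C2; auto.
    lra. }
  assert (V1 <= Rmax V1 V2) by apply Rmax_l.
  assert (V2 <= Rmax V1 V2) by apply Rmax_r.
  apply Rmult_le_reg_l with (a1 - a2); [lra|].
  assert ((a1 - lo) * V2 + (lo - a2) * V1 <= (a1 - a2) * Rmax V1 V2).
  { assert ((a1 - lo) * V2 <= (a1 - lo) * Rmax V1 V2) by (apply Rmult_le_compat_l; lra).
    assert ((lo - a2) * V1 <= (lo - a2) * Rmax V1 V2) by (apply Rmult_le_compat_l; lra).
    lra. }
  lra.
Qed.


Definition phic (c a q : R) := q * u a (c / q).
Definition Dphi (c a z : R) := u a (c / z) - (c / z) * du a (c / z).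

Lemma phi_TAN c a : 0 < c -> TAN (phic c a) (Dphi c a).
Proof.
  intros hc p z hp hz. unfold phic, Dphi.
  pose proof (u_tan a (c / p) (c / z) ltac:(apply Rdiv_lt_0_compat; auto)
     ltac:(apply Rdiv_lt_0_compat; auto)) as T.
  set (t := c / z) in *. set (U := u a t) in *. set (d := du a t) in *.
  apply Rmult_le_compat_l with (r := p) in T; [|lra].
  assert (z * U + (U - t * d) * (p - z) = p * (U + d * (c / p - t))).
  { unfold t. field. lra. }
  lra.
Qed.

Lemma fsum_ext f g n : (forall i, (i < n)%nat -> f i = g i) -> fsum f n = fsum g n.
Proof.
  induction n; intros h; simpl; auto.
  rewrite IHn, h; auto.
Qed.

Lemma fsum_ite_gen (A B : R) k n :
  fsum (fun x => if Nat.ltb x k then A else B) n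
  = INR (Nat.min k n) * A + (INR n - INR (Nat.min k n)) * B.
Proof.
  induction n; simpl fsum.
  - rewrite Nat.min_0_r. simpl. ring.
  - rewrite IHn. destruct (Nat.ltb_spec n k).
    + rewrite (Nat.min_r k n) by lia. rewrite (Nat.min_r k (S n)) by lia.
      rewrite S_INR. ring.
    + rewrite (Nat.min_l k n) by lia. rewrite (Nat.min_l k (S n)) by lia.
      rewrite S_INR. ring.
Qed.

Lemma fsum_ite (A B : R) k n : (k <= n)%nat ->
  fsum (fun x => if Nat.ltb x k then A else B) n = INR k * A + (INR n - INR k) * B.
Proof. intros h. rewrite fsum_ite_gen, Nat.min_l; auto. Qed.

Lemma argmin (Q : nat -> R) m : exists j, (j <= m)%nat /\ forall i, (i <= m)%nat -> Q j <= Q i.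
Proof.
  induction m.
  - exists 0%nat. split; auto. intros i hi. assert (i = 0%nat) by lia. subst; lra.
  - destruct IHm as [j [hj hm]].
    destruct (Rle_dec (Q j) (Q (S m))).
    + exists j. split; [lia|]. intros i hi. destruct (Nat.eq_dec i (S m)).
      subst; auto. apply hm; lia.
    + exists (S m). split; [lia|]. intros i hi. destruct (Nat.eq_dec i (S m)).
      subst; lra. specialize (hm i ltac:(lia)). lra.
Qed.


Definition av rho n k := / (INR k * rho + (INR n - INR k)).
Definition G a rho n k := INR k * phic (/ INR n) a (rho * av rho n k)
   + (INR n - INR k) * phic (/ INR n) a (av rho n k).
Fixpoint maxG a rho n K := match K with
  | O => G a rho n 0
  | S K' => Rmax (maxG a rho n K') (G a rho n (S K')) end.
Definition vQ rho n k x := if Nat.ltb x k then rho * av rho n k else av rho n k.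

Lemma maxG_ge a rho n K k : (k <= K)%nat -> G a rho n k <= maxG a rho n K.
Proof.
  induction K; intros h; simpl.
  - assert (k = 0%nat) by lia. subst; lra.
  - destruct (Nat.eq_dec k (S K)). subst; apply Rmax_r.
    eapply Rle_trans; [apply IHK; lia| apply Rmax_l].
Qed.

Lemma maxG_att a rho n K : exists k, (k <= K)%nat /\ maxG a rho n K = G a rho n k.
Proof.
  induction K; simpl.
  - exists 0%nat; auto.
  - destruct IHK as [k [hk e]]. unfold Rmax. destruct (Rle_dec _ _).
    + exists (S K); auto.
    + exists k; split; auto.
Qed.

Lemma av_pos rho n k : 1 < rho -> (1 <= n)%nat -> (k <= n)%nat -> 0 < av rho n k.
Proof.
  intros hr hn hk. unfold av. apply Rinv_0_lt_compat.
  apply le_INR in hk. apply le_INR in hn. pose proof (pos_INR k). simpl in hn. nra.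
Qed.

Lemma vertex a rho n k : 1 < rho -> (1 <= n)%nat -> (k <= n)%nat ->
  in_Pn n rho (vQ rho n k) /\ DA a n (Unif n) (vQ rho n k) = G a rho n k.
Proof.
  intros hr hn hk. pose proof (av_pos rho n k hr hn hk) as hp.
  split; [split; [|split]|].
  - intros i _. unfold vQ. destruct (Nat.ltb i k); nra.
  - unfold vQ. rewrite fsum_ite by auto. unfold av.
    apply le_INR in hk. apply le_INR in hn. pose proof (pos_INR k). simpl in hn.
    field. nra.
  - intros i j _ _. unfold vQ. assert (0 < rho * av rho n k) by nra. destruct (Nat.ltb i k), (Nat.ltb j k); nra.
  - unfold DA, Unif, G.
    rewrite <- fsum_ite by auto. apply fsum_ext. intros i _. unfold vQ, phic.
    destruct (Nat.ltb i k); reflexivity.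
Qed.

Lemma upper a rho m Q : 1 < rho -> in_Pn (S m) rho Q ->
  DA a (S m) (Unif (S m)) Q <= maxG a rho (S m) (S m).
Proof.
  intros hr [hpos [hsum hrat]].
  set (n := S m) in *. set (c := / INR n).
  assert (hn : 0 < INR n) by (unfold n; rewrite S_INR; pose proof (pos_INR m); lra).
  assert (hc : 0 < c) by (apply Rinv_0_lt_compat; auto).
  assert (eDA : DA a n (Unif n) Q = fsum (fun i => phic c a (Q i)) n) by reflexivity.
  rewrite eDA.
  destruct (argmin Q m) as [j0 [hj0 hmin]].
  set (lo := Q j0). assert (hlo : 0 < lo) by (apply hpos; unfold n; lia).
  destruct (greedy (phic c a) (Dphi c a) (phi_TAN c a hc) lo (rho * lo) hlo ltac:(nra) m Q)
    as (k & j & r & hkj & hr' & hs & hf).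
  { intros i hi. split. apply hmin; auto. apply hrat; unfold n; lia. }
  fold n in hs, hf. rewrite hsum in hs.
  pose proof (step2 (phic c a) (Dphi c a) (phi_TAN c a hc) rho (INR k) (INR j) lo r hr
     (pos_INR k) (pos_INR j) hlo hr' ltac:(lra)) as S2.
  assert (eN : INR n = INR k + INR j + 1).
  { unfold n. rewrite S_INR, <- hkj, plus_INR. ring. }
  assert (E1 : G a rho n k = INR k * phic c a (rho * / (INR k * rho + INR j + 1)) +
      (INR j + 1) * phic c a (/ (INR k * rho + INR j + 1))).
  { unfold G, av. fold c. rewrite eN.
    replace (INR k * rho + (INR k + INR j + 1 - INR k)) with (INR k * rho + INR j + 1) by ring.
    replace (INR k + INR j + 1 - INR k) with (INR j + 1) by ring. reflexivity. }
  assert (E2 : G a rho n (S k) = (INR k + 1) * phic c a (rho * / ((INR k + 1) * rho + INR j)) +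
      INR j * phic c a (/ ((INR k + 1) * rho + INR j))).
  { unfold G, av. fold c. rewrite eN, S_INR.
    replace ((INR k + 1) * rho + (INR k + INR j + 1 - (INR k + 1))) with ((INR k + 1) * rho + INR j) by ring.
    replace (INR k + INR j + 1 - (INR k + 1)) with (INR j) by ring. reflexivity. }
  rewrite <- E1, <- E2 in S2.
  assert (Rmax (G a rho n k) (G a rho n (S k)) <= maxG a rho n n).
  { apply Rmax_lub; apply maxG_ge; unfold n; lia. }
  lra.
Qed.

Lemma part1 a rho n : 1 < rho -> (1 <= n)%nat -> is_max_div a rho n (maxG a rho n n).
Proof.
  intros hr hn. split.
  - destruct (maxG_att a rho n n) as [k [hk e]].
    exists (vQ rho n k). destruct (vertex a rho n k hr hn hk). split; auto. lra.
  - intros Q hQ. destruct n; [lia|]. apply upper; auto.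
Qed.


Definition Gam a rho s := ((s - 1) * rho * u a (s / rho) + (rho - s) * u a s) / ((rho - 1) * s).

Definition GamOK a rho := (forall s, 0 < s -> Gam a rho s <= DeltaA a rho) /\
   exists s0, 1 <= s0 <= rho /\ Gam a rho s0 = DeltaA a rho.

Lemma lnfacts rho : 1 < rho -> 0 < ln rho /\ ln rho <= rho - 1 /\ rho - 1 <= rho * ln rho.
Proof.
  intros h. split. rewrite <- ln_1. apply ln_increasing; lra.
  split. apply ln_le; lra.
  pose proof (ln_le (/ rho) ltac:(apply Rinv_0_lt_compat; lra)).
  rewrite ln_Rinv in H by lra.
  apply Rmult_le_compat_l with (r := rho) in H; [|lra].
  replace (rho * (/ rho - 1)) with (1 - rho) in H by (field; lra). lra.
Qed.

Lemma Gam0 rho : 1 < rho -> GamOK 0 rho.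
Proof.
  intros hr. destruct (lnfacts rho hr) as (hL & hL1 & hL2).
  set (L := ln rho) in *.
  set (d := rho * L / (rho - 1)).
  assert (hd1 : 1 <= d).
  { apply Rmult_le_reg_r with (rho - 1); [lra|]. unfold d.
    replace (rho * L / (rho - 1) * (rho - 1)) with (rho * L) by (field; lra). lra. }
  assert (hd2 : d <= rho).
  { apply Rmult_le_reg_r with (rho - 1); [lra|]. unfold d.
    replace (rho * L / (rho - 1) * (rho - 1)) with (rho * L) by (field; lra). nra. }
  assert (hD : DeltaA 0 rho = d - (1 + ln d)).
  { unfold DeltaA. destruct (Req_EM_T 0 0); [|lra].
    replace (exp 1 * rho * ln rho / (rho - 1)) with (exp 1 * d) by (unfold d, L; field; lra).
    rewrite ln_mult, ln_exp by (try apply exp_pos; lra). reflexivity. }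
  assert (key : forall s, 0 < s -> DeltaA 0 rho - Gam 0 rho s = d / s - 1 - (ln d - ln s)).
  { intros s hs. rewrite hD. unfold Gam, u. destruct (Req_EM_T 0 0); [|lra].
    rewrite ln_div by lra. fold L. unfold d. field. lra. }
  split.
  - intros s hs. pose proof (key s hs). pose proof (ln_le (d / s) ltac:(apply Rdiv_lt_0_compat; lra)).
    rewrite ln_div in H0 by lra. lra.
  - exists d. split; [lra|]. pose proof (key d ltac:(lra)).
    replace (d / d) with 1 in H by (field; lra). lra.
Qed.

Lemma Gam1 rho : 1 < rho -> GamOK 1 rho.
Proof.
  intros hr. destruct (lnfacts rho hr) as (hL & hL1 & hL2).
  set (L := ln rho) in *.
  set (e := L / (rho - 1)).
  assert (he : 0 < e) by (apply Rdiv_lt_0_compat; lra).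
  assert (hD : DeltaA 1 rho = rho * e - (1 + (L + ln e))).
  { unfold DeltaA. destruct (Req_EM_T 1 0); [lra|]. destruct (Req_EM_T 1 1); [|lra].
    replace (exp 1 * rho * ln rho / (rho - 1)) with (exp 1 * (rho * e)) by (unfold e, L; field; lra).
    assert (0 < rho * e) by (apply Rmult_lt_0_compat; lra).
    rewrite ln_mult; [|apply exp_pos|auto]. rewrite ln_exp, ln_mult by lra.
    fold L. unfold e at 2. unfold Rdiv. ring. }
  assert (key : forall s, 0 < s -> DeltaA 1 rho - Gam 1 rho s = s * e - 1 - (ln s + ln e)).
  { intros s hs. rewrite hD. unfold Gam, u. destruct (Req_EM_T 1 0); [lra|].
    destruct (Req_EM_T 1 1); [|lra].
    rewrite ln_div by lra. fold L. unfold e. field. lra. }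
  split.
  - intros s hs. pose proof (key s hs). pose proof (ln_le (s * e) ltac:(apply Rmult_lt_0_compat; lra)).
    rewrite ln_mult in H0 by lra. lra.
  - exists (/ e). split.
    + unfold e. rewrite Rinv_div. split.
      * apply Rmult_le_reg_r with L; [lra|].
        replace ((rho - 1) / L * L) with (rho - 1) by (field; lra). lra.
      * apply Rmult_le_reg_r with L; [lra|].
        replace ((rho - 1) / L * L) with (rho - 1) by (field; lra). lra.
    + pose proof (key (/ e) ltac:(apply Rinv_0_lt_compat; lra)).
      rewrite ln_Rinv in H by lra. replace (/ e * e) with 1 in H by (field; lra). lra.
Qed.


Lemma sq_pos_le (t z : R) : t <> 0 -> 0 <= t * t * z -> 0 <= z.
Proof. intros ht h. assert (0 < t * t) by nra. destruct (Rle_dec 0 z); auto. nra. Qed.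

Lemma GamA a rho : 1 < rho -> a <> 0 -> a <> 1 -> GamOK a rho.
Proof.
  intros hr n0 n1.
  assert (hL : 0 < ln rho) by (rewrite <- ln_1; apply ln_increasing; lra).
  set (L := ln rho) in *.
  set (p := Rpower rho a).
  assert (hrho : rho = exp L) by (unfold L; rewrite exp_ln; lra).
  assert (hp : p = exp (a * L)) by reflexivity.
  set (a0 := (p - 1) / a). set (b0 := (rho - p) / (1 - a)).
  assert (ha0 : 0 < a0).
  { unfold a0. destruct (Rlt_le_dec 0 a).
    - apply Rdiv_lt_0_compat; auto. rewrite hp, <- exp_0 at 1.
      assert (exp 0 < exp (a * L)) by (apply exp_increasing; nra). lra.
    - assert (a < 0) by lra.
      assert (exp (a * L) < exp 0) by (apply exp_increasing; nra). rewrite exp_0 in H0.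
      unfold Rdiv. replace ((p - 1) * / a) with ((1 - p) * / (- a)) by (field; lra).
      apply Rmult_lt_0_compat. lra. apply Rinv_0_lt_compat; lra. }
  assert (hb0 : 0 < b0).
  { unfold b0. destruct (Rlt_le_dec a 1).
    - apply Rdiv_lt_0_compat; [|lra]. rewrite hp, hrho at 1.
      assert (exp (a * L) < exp L) by (apply exp_increasing; nra). lra.
    - assert (1 < a) by lra.
      assert (exp L < exp (a * L)) by (apply exp_increasing; nra).
      unfold Rdiv. replace ((rho - p) * / (1 - a)) with ((p - rho) * / (a - 1)) by (field; lra).
      apply Rmult_lt_0_compat. rewrite hp, hrho at 1. lra. apply Rinv_0_lt_compat; lra. }
  assert (haa : a * (a - 1) <> 0) by (apply Rmult_integral_contrapositive; split; lra).
  assert (hpr : p <> rho).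
  { intro e. unfold b0 in hb0. rewrite e in hb0. unfold Rdiv in hb0. lra. }
  assert (hD : DeltaA a rho = / (a * (a - 1)) * (Rpower a0 a * Rpower b0 (1 - a) / (rho - 1) - 1)).
  { unfold DeltaA. destruct (Req_EM_T a 0); [lra|]. destruct (Req_EM_T a 1); [lra|]. reflexivity. }
  assert (key : forall s, 0 < s ->
     DeltaA a rho - Gam a rho s =
     b0 * Rpower (s / rho) a * (a * (a - 1) * (Rpower (a0 / (b0 * (s / rho))) a - 1 - a * (a0 / (b0 * (s / rho)) - 1)))
       / ((rho - 1) * ((a * (a - 1)) * (a * (a - 1))))).
  { intros s hs. set (w := s / rho). set (q := Rpower w a).
    assert (hw : 0 < w) by (apply Rdiv_lt_0_compat; lra).
    assert (hs' : s = rho * w) by (unfold w; field; lra).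
    assert (hpq : Rpower s a = p * q).
    { rewrite hs'. unfold p, q. rewrite Rpower_mult_distr; auto; lra. }
    assert (hK : Rpower a0 a * Rpower b0 (1 - a) = b0 * q * Rpower (a0 / (b0 * w)) a).
    { assert (0 < b0 * w) by (apply Rmult_lt_0_compat; lra).
      unfold q, Rpower. rewrite (ln_div a0 (b0 * w)) by lra. rewrite (ln_mult b0 w) by lra.
      rewrite <- (exp_ln b0) at 2 by lra. rewrite <- !exp_plus. f_equal. ring. }
    rewrite hD, hK. unfold Gam, u. destruct (Req_EM_T a 0); [lra|]. destruct (Req_EM_T a 1); [lra|].
    fold w q. rewrite hpq. set (B := Rpower (a0 / (b0 * w)) a).
    unfold a0, b0. rewrite hs'. field.
    repeat split; try lra; intro e; apply hpr; lra. }
  split.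
  - intros s hs. pose proof (key s hs) as K.
    assert (hx : 0 < a0 / (b0 * (s / rho))).
    { apply Rdiv_lt_0_compat; auto. apply Rmult_lt_0_compat; auto. apply Rdiv_lt_0_compat; lra. }
    pose proof (bern _ a hx) as Bn.
    assert (0 <= b0 * Rpower (s / rho) a * (a * (a - 1) * (Rpower (a0 / (b0 * (s / rho))) a - 1 - a * (a0 / (b0 * (s / rho)) - 1)))
       / ((rho - 1) * ((a * (a - 1)) * (a * (a - 1))))).
    { apply Rmult_le_pos. apply Rmult_le_pos. apply Rmult_le_pos. lra. left; unfold Rpower; apply exp_pos.
      lra. left. apply Rinv_0_lt_compat. apply Rmult_lt_0_compat. lra.
      assert (0 <= a * (a - 1) * (a * (a - 1))) by nra.
      destruct H; auto. exfalso. symmetry in H. apply Rmult_integral in H. destruct H; auto. }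
    lra.
  - exists (rho * a0 / b0). split.
    +
      pose proof (bern rho a ltac:(lra)) as B1.
      pose proof (bern rho (1 - a) ltac:(lra)) as B2.
      assert (hp2 : Rpower rho (1 - a) = rho / p).
      { unfold Rminus. rewrite Rpower_plus, Rpower_Ropp, Rpower_1 by lra. reflexivity. }
      rewrite hp2 in B2. fold p in B1.
      assert (ht : a * (1 - a) <> 0) by (apply Rmult_integral_contrapositive; split; lra).
      assert (hpp : 0 < p) by (rewrite hp; apply exp_pos).
      assert (I1 : a * (1 - a) * (a * (1 - a)) * (b0 - a0) = a * (a - 1) * (p - 1 - a * (rho - 1))).
      { unfold a0, b0. field. split; lra. }
      assert (I2 : a * (1 - a) * (a * (1 - a)) * (rho * a0 - b0) = p * ((1 - a) * (1 - a - 1) * (rho / p - 1 - (1 - a) * (rho - 1)))).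
      { unfold a0, b0. field. repeat split; lra. }
      assert (h1 : 0 <= b0 - a0) by (apply (sq_pos_le (a * (1 - a))); auto; lra).
      assert (h2 : 0 <= rho * a0 - b0).
      { apply (sq_pos_le (a * (1 - a))); auto. rewrite I2. apply Rmult_le_pos; lra. }
      split.
      * apply Rmult_le_reg_r with b0; auto. replace (rho * a0 / b0 * b0) with (rho * a0) by (field; lra). lra.
      * apply Rmult_le_reg_r with b0; auto. replace (rho * a0 / b0 * b0) with (rho * a0) by (field; lra). nra.
    + assert (hs0 : 0 < rho * a0 / b0) by (apply Rdiv_lt_0_compat; nra).
      pose proof (key _ hs0) as K.
      replace (a0 / (b0 * (rho * a0 / b0 / rho))) with 1 in K by (field; repeat split; lra).
      assert (Rpower 1 a = 1) by (unfold Rpower; rewrite ln_1, Rmult_0_r, exp_0; auto).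
      rewrite H in K. replace (1 - 1 - a * (1 - 1)) with 0 in K by ring.
      rewrite Rmult_0_r, Rmult_0_r in K. unfold Rdiv in K. rewrite Rmult_0_l in K. lra.
Qed.


Lemma ex_cont (f : R -> R) x : ex_derive f x -> continuity_pt f x.
Proof. intros h. apply derivable_continuous_pt. now apply ex_derive_Reals_0. Qed.

Lemma Gam_cont a rho s0 : 1 < rho -> 0 < s0 -> continuity_pt (Gam a rho) s0.
Proof.
  intros hr hs. unfold Gam, u.
  destruct (Req_EM_T a 0); [|destruct (Req_EM_T a 1)]; unfold Rpower;
  apply ex_cont; auto_derive; repeat split; try apply Rmult_lt_0_compat; try apply Rinv_0_lt_compat;
    try lra; apply Rmult_integral_contrapositive; split; lra.
Qed.

Lemma G_Gam a rho n k : 1 < rho -> (1 <= n)%nat -> (k <= n)%nat ->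
  G a rho n k = Gam a rho (1 + (rho - 1) * INR k / INR n).
Proof.
  intros hr hn hk. apply le_INR in hk. apply le_INR in hn. simpl in hn.
  pose proof (pos_INR k).
  set (K := INR k) in *. set (N := INR n) in *.
  unfold G, phic, av, Gam. fold K N.
  set (s := 1 + (rho - 1) * K / N).
  assert (hD : 0 < K * rho + (N - K)) by nra.
  assert (e1 : / N / (rho * / (K * rho + (N - K))) = s / rho) by (unfold s; field; lra).
  assert (e2 : / N / / (K * rho + (N - K)) = s) by (unfold s; field; lra).
  rewrite e1, e2.
  assert (hs : s = (K * rho + (N - K)) / N) by (unfold s; field; lra).
  rewrite hs. field. lra.
Qed.

Lemma near_nat n x : 0 <= x <= INR n -> exists k, (k <= n)%nat /\ Rabs (INR k - x) <= 1.
Proof.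
  induction n; intros hx.
  - exists 0%nat. split; auto. simpl in hx. replace (INR 0 - x) with (- x) by (simpl; ring).
    rewrite Rabs_Ropp, Rabs_right; lra.
  - destruct (Rle_dec x (INR n)).
    + destruct IHn as [k [hk h]]. lra. exists k; split; auto; lia.
    + exists (S n). split; auto. rewrite S_INR in *. rewrite Rabs_right; lra.
Qed.

Lemma cont_eps f x : continuity_pt f x -> forall e, 0 < e -> exists d, 0 < d /\
   forall y, Rabs (y - x) < d -> Rabs (f y - f x) < e.
Proof.
  intros H e he. destruct (H e he) as [d [hd H']]. exists d. split; auto.
  intros y hy. destruct (Req_dec y x). subst. rewrite Rminus_diag, Rabs_R0; auto.
  apply H'. split. split. constructor. auto. exact hy.
Qed.

Lemma GamOK_all a rho : 1 < rho -> GamOK a rho.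
Proof.
  intros hr. destruct (Req_EM_T a 0) as [e|n0]. subst; apply Gam0; auto.
  destruct (Req_EM_T a 1) as [e|n1]. subst; apply Gam1; auto. apply GamA; auto.
Qed.

Theorem corollary1 (alpha rho : R) (hrho : 1 < rho) :
  exists M : nat -> R,
    (forall n : nat, (1 <= n)%nat -> is_max_div alpha rho n (M n)) /\
    Un_cv M (DeltaA alpha rho).
Proof.
  exists (fun n => maxG alpha rho n n). split.
  - intros n hn. apply part1; auto.
  - destruct (GamOK_all alpha rho hrho) as [hle [s0 [hs0 hG0]]].
    intros eps heps.
    destruct (cont_eps _ _ (Gam_cont alpha rho s0 hrho ltac:(lra)) eps heps) as [d [hd hc]].
    destruct (INR_archimed d (rho - 1) hd) as [N hN].
    exists N. intros n hn.
    assert (hnN : INR N <= INR n) by (apply le_INR; lia).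
    assert (hn1 : (1 <= n)%nat).
    { destruct n. destruct N. simpl in hN. lra. lia. lia. }
    assert (hnp : 0 < INR n) by (apply lt_0_INR; lia).
    set (lam := (s0 - 1) / (rho - 1)).
    assert (hlam : 0 <= lam <= 1).
    { unfold lam. split. apply Rdiv_le_0_compat; lra.
      apply Rmult_le_reg_r with (rho - 1); [lra|].
      replace ((s0 - 1) / (rho - 1) * (rho - 1)) with (s0 - 1) by (field; lra). lra. }
    destruct (near_nat n (INR n * lam) ltac:(split; nra)) as [k [hk hk1]].
    set (sk := 1 + (rho - 1) * INR k / INR n).
    assert (hsk : Rabs (sk - s0) < d).
    { assert (sk - s0 = (rho - 1) / INR n * (INR k - INR n * lam)).
      { unfold sk, lam. field. lra. }
      rewrite H, Rabs_mult, (Rabs_right ((rho - 1) / INR n)).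
      2: { left; apply Rdiv_lt_0_compat; lra. }
      apply Rle_lt_trans with ((rho - 1) / INR n * 1).
      apply Rmult_le_compat_l; auto. left; apply Rdiv_lt_0_compat; lra.
      apply Rmult_lt_reg_r with (INR n); auto.
      replace ((rho - 1) / INR n * 1 * INR n) with (rho - 1) by (field; lra). nra. }
    pose proof (hc sk hsk) as hc'. rewrite hG0 in hc'.
    assert (low : Gam alpha rho sk <= maxG alpha rho n n).
    { unfold sk. rewrite <- G_Gam; auto. apply maxG_ge; auto. }
    destruct (maxG_att alpha rho n n) as [k' [hk' e']].
    assert (up : maxG alpha rho n n <= DeltaA alpha rho).
    { rewrite e', G_Gam; auto. apply hle.
      assert (0 <= (rho - 1) * INR k' / INR n).
      { apply Rdiv_le_0_compat; auto. apply Rmult_le_pos. lra. apply pos_INR. }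
      lra. }
    unfold R_dist. apply Rabs_def1.
    + lra.
    + apply Rabs_def2 in hc'. lra.
Qed.
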